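(* Let $\mathcal{H}$ be a complex separable Hilbert space and let $T = MN - NM$ where $M, N \in \mathcal{B}(\mathcal{H})$ satisfy $M^2 = 0 = N^2$. Then (a) every connected component of $\sigma(T)$ intersects $\sigma(-T)$; (b) every connected component of $\sigma_e(T)$ intersects $\sigma_e(-T)$.
   Context: $\sigma_e(T)$ denotes the essential spectrum of $T$, i.e. the spectrum of the image of $T$ in the Calkin algebra $\mathcal{B}(\mathcal{H})/\mathcal{K}(\mathcal{H})$. *)

(* Defs.v *)
(* Complex numbers are R[i] (real_closed
   complex) for an abstract R : realType; a complex Hilbert space is a
   R[i]-left-module equipped with an inner product that is complete for the
   induced norm. *)
From HB Require Import structures.
From mathcomp Require Import all_boot all_algebra.
From mathcomp Require Import all_classical all_reals all_analysis.
From mathcomp Require Export complex.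
Import numFieldNormedType.Exports.
Import GRing.Theory Num.Theory.

Set Implicit Arguments.
Unset Strict Implicit.
Unset Printing Implicit Defensive.

Local Open Scope classical_set_scope.
Local Open Scope ring_scope.

Section Hilbert.
Variable R : realType.
Local Notation C := R[i].
Variable V : lmodType C.
Variable ip : V -> V -> C.

Definition inner_product : Prop :=
  [/\ (forall x y z, ip (x + y) z = ip x z + ip y z),
      (forall (a : C) x y, ip (a *: x) y = a * ip x y),
      (forall x y, ip y x = Num.conj (ip x y)),
      (forall x, 0 <= ip x x)
    & (forall x, ip x x = 0 -> x = 0)].

Definition ipnorm (x : V) : R := Num.sqrt (complex.Re (ip x x)).

Definition ip_cauchy (u : nat -> V) : Prop :=
  forall e : R, 0 < e -> exists N : nat, forall m n : nat,
    (N <= m)%N -> (N <= n)%N -> ipnorm (u m - u n) < e.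

Definition ip_converges (u : nat -> V) (l : V) : Prop :=
  forall e : R, 0 < e -> exists N : nat, forall n : nat,
    (N <= n)%N -> ipnorm (u n - l) < e.

Definition ip_complete : Prop :=
  forall u : nat -> V, ip_cauchy u -> exists l : V, ip_converges u l.

Definition is_hilbert : Prop := inner_product /\ ip_complete.

Definition ip_separable : Prop :=
  exists d : nat -> V, forall (x : V) (e : R), 0 < e ->
    exists n : nat, ipnorm (x - d n) < e.

Definition bounded_op (T : V -> V) : Prop :=
  (forall (a : C) x y, T (a *: x + y) = a *: T x + T y) /\
  exists K : R, forall x, ipnorm (T x) <= K * ipnorm x.

Definition compact_op (T : V -> V) : Prop :=
  bounded_op T /\
  forall u : nat -> V, (exists K : R, forall n, ipnorm (u n) <= K) ->
    exists phi : nat -> nat, (forall n, (phi n < phi n.+1)%N) /\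
      exists l : V, ip_converges (fun n => T (u (phi n))) l.

Definition op_shift (T : V -> V) (z : C) : V -> V := fun x => T x - z *: x.

Definition spectrum (T : V -> V) : set C :=
  [set z | ~ exists S : V -> V, bounded_op S /\
      (forall x, S (op_shift T z x) = x) /\
      (forall x, op_shift T z (S x) = x)].

(* essential spectrum: z such that the image of T - z I in the Calkin
   algebra B(H)/K(H) is not invertible, i.e. there is no S in B(H) with
   S(T - zI) - I and (T - zI)S - I both compact *)
Definition ess_spectrum (T : V -> V) : set C :=
  [set z | ~ exists S : V -> V, bounded_op S /\
      compact_op (fun x => S (op_shift T z x) - x) /\
      compact_op (fun x => op_shift T z (S x) - x)].

End Hilbert.

Definition components_meet (R : realType) (A B : set R[i]) : Prop :=
  forall z : R[i], A z ->
    (connected_component (A : set R[i]^o) z `&` B) !=set0.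

(* Main.v *)
Require Import Defs.
From HB Require Import structures.
From mathcomp Require Import all_boot all_algebra.
From mathcomp Require Import all_classical all_reals all_analysis.
From mathcomp Require Import complex.
From mathcomp Require Import ring lra.
Import numFieldNormedType.Exports.
Import order.Order.TTheory GRing.Theory Num.Theory.
Local Open Scope classical_set_scope.
Local Open Scope ring_scope.
Local Open Scope complex_scope.
Set Implicit Arguments. Unset Strict Implicit.
Definition n2 (R : realType) (V : lmodType R[i]) (ip : V -> V -> R[i]) (v : V) : R :=
  complex.Re (ip v v).
Arguments n2 {R V} ip v.

Lemma ip_real (R : realType) (V : lmodType R[i]) (ip : V -> V -> R[i])
  (H : inner_product ip) v : ip v v = (n2 ip v)%:C.
Proof.
case: H => _ _ _ Hp _; have := Hp v; rewrite /n2.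
case: (ip v v) => a b; rewrite lecE /= => /andP[/eqP -> _]; by [].
Qed.

Lemma n2_ge0 (R : realType) (V : lmodType R[i]) (ip : V -> V -> R[i])
  (H : inner_product ip) v : 0 <= n2 ip v.
Proof.
case: H => _ _ _ Hp _; have := Hp v; rewrite /n2.
case: (ip v v) => a b; rewrite lecE /= => /andP[_ ->] //.
Qed.

Lemma ipD2 (R : realType) (V : lmodType R[i]) (ip : V -> V -> R[i])
  (H : inner_product ip) x y z : ip x (y + z) = ip x y + ip x z.
Proof.
case: H => Ha _ Hc _ _.
by rewrite Hc Ha rmorphD [ip x y]Hc [ip x z]Hc.
Qed.

Lemma ipZ2 (R : realType) (V : lmodType R[i]) (ip : V -> V -> R[i])
  (H : inner_product ip) (c : R[i]) x y : ip x (c *: y) = Num.conj c * ip x y.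
Proof.
case: H => _ Hb Hc _ _.
by rewrite Hc Hb rmorphM [ip x y]Hc.
Qed.

Lemma Re_conj (R : realType) (z : R[i]) : complex.Re (Num.conj z) = complex.Re z.
Proof. by case: z. Qed.

Lemma n2D (R : realType) (V : lmodType R[i]) (ip : V -> V -> R[i])
  (H : inner_product ip) x y :
  n2 ip (x + y) = n2 ip x + n2 ip y + 2 * complex.Re (ip x y).
Proof.
have H' := H; case: H' => Ha _ Hc _ _.
rewrite /n2 Ha !(ipD2 H) [ip y x]Hc.
rewrite !raddfD /= Re_conj. lra.
Qed.

Lemma ReRM (R : realType) (t : R) (z : R[i]) : complex.Re (t%:C * z) = t * complex.Re z.
Proof. case: z => a b /=. lra. Qed.

Lemma n2Z (R : realType) (V : lmodType R[i]) (ip : V -> V -> R[i])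
  (H : inner_product ip) (c : R[i]) x :
  n2 ip (c *: x) = ((complex.Re c)^+2 + (complex.Im c)^+2) * n2 ip x.
Proof.
have H' := H; case: H' => _ Hb Hc _ _.
rewrite /n2 Hb (ipZ2 H) (ip_real H) mulrA.
have -> : c * Num.conj c = ((complex.Re c)^+2 + (complex.Im c)^+2)%:C.
  by rewrite add_Re2_Im2 sqr_normc.
by rewrite -rmorphM.
Qed.

Lemma n2_eq0 (R : realType) (V : lmodType R[i]) (ip : V -> V -> R[i])
  (H : inner_product ip) x : n2 ip x = 0 -> x = 0.
Proof.
move=> h; case: (H) => _ _ _ _ He; apply: He; by rewrite (ip_real H) h.
Qed.

Lemma ip0l (R : realType) (V : lmodType R[i]) (ip : V -> V -> R[i])
  (H : inner_product ip) x : ip 0 x = 0.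
Proof.
case: (H) => _ Hb _ _ _. by rewrite -(scale0r (0:V)) Hb mul0r.
Qed.

Lemma ip0r (R : realType) (V : lmodType R[i]) (ip : V -> V -> R[i])
  (H : inner_product ip) x : ip x 0 = 0.
Proof.
case: (H) => _ _ Hc _ _. by rewrite Hc (ip0l H) rmorph0.
Qed.

Lemma cauchy_schwarz (R : realType) (V : lmodType R[i]) (ip : V -> V -> R[i])
  (H : inner_product ip) x y :
  (complex.Re (ip x y))^+2 <= n2 ip x * n2 ip y.
Proof.
have [|hy] := eqVneq (n2 ip y) 0.
  move=> h0; rewrite h0 mulr0 (n2_eq0 H h0) (ip0r H) /= expr0n //.
have hy0 : 0 < n2 ip y by rewrite lt0r hy n2_ge0.
set r := complex.Re (ip x y).
set t := - r / n2 ip y.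
have := n2_ge0 H (x + t%:C *: y).
rewrite (n2D H) (n2Z H) (ipZ2 H) /= [0 ^+ 2]expr2 mulr0 addr0.
have -> : Num.conj (t%:C) = t%:C by apply/eqP; rewrite eq_complex /= oppr0 !eqxx.
rewrite ReRM -/r.
have hx := n2_ge0 H x.
rewrite /t => h.
have e : n2 ip x * n2 ip y - r^+2 = n2 ip y * (n2 ip x + (- r / n2 ip y) ^+ 2 * n2 ip y + 2 * (- r / n2 ip y * r)).
  field. by rewrite hy.
rewrite -subr_ge0 e. by apply: mulr_ge0 => //; apply: n2_ge0.
Qed.

Lemma ipnorm_ge0 (R : realType) (V : lmodType R[i]) (ip : V -> V -> R[i]) x :
  0 <= ipnorm ip x.
Proof. exact: sqrtr_ge0. Qed.

Lemma ipnormZ (R : realType) (V : lmodType R[i]) (ip : V -> V -> R[i])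
  (H : inner_product ip) (c : R[i]) x :
  ipnorm ip (c *: x) = Num.sqrt ((complex.Re c)^+2 + (complex.Im c)^+2) * ipnorm ip x.
Proof.
rewrite /ipnorm -!/(n2 ip _) (n2Z H) sqrtrM //.
by apply: addr_ge0; apply: sqr_ge0.
Qed.

Lemma ipnormD (R : realType) (V : lmodType R[i]) (ip : V -> V -> R[i])
  (H : inner_product ip) x y :
  ipnorm ip (x + y) <= ipnorm ip x + ipnorm ip y.
Proof.
rewrite /ipnorm -!/(n2 ip _) (n2D H).
have cs := cauchy_schwarz H x y.
have ha := n2_ge0 H x; have hb := n2_ge0 H y.
set a := n2 ip x in cs ha *; set b := n2 ip y in cs hb *.
set r := complex.Re (ip x y) in cs *.
have sa := sqrtr_ge0 a; have sb := sqrtr_ge0 b.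
have sa2 : Num.sqrt a ^+ 2 = a by rewrite sqr_sqrtr.
have sb2 : Num.sqrt b ^+ 2 = b by rewrite sqr_sqrtr.
have hs : 0 <= Num.sqrt a + Num.sqrt b by apply: addr_ge0.
rewrite -[X in _ <= X]ger0_norm // -sqrtr_sqr.
apply: ler_wsqrtr.
have hp : 0 <= Num.sqrt a * Num.sqrt b by apply: mulr_ge0.
have cs' : r ^+ 2 <= (Num.sqrt a * Num.sqrt b) ^+ 2 by rewrite exprMn sa2 sb2.
have : r <= Num.sqrt a * Num.sqrt b.
  set p := Num.sqrt a * Num.sqrt b in hp cs' *; nra.
have -> : (Num.sqrt a + Num.sqrt b) ^+ 2 = a + b + 2 * (Num.sqrt a * Num.sqrt b).
  by rewrite sqrrD sa2 sb2 mulr2n; ring.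
lra.
Qed.

Lemma lin0 (R : realType) (V : lmodType R[i]) (T : V -> V) :
  (forall (a : R[i]) x y, T (a *: x + y) = a *: T x + T y) -> T 0 = 0.
Proof.
move=> Hl; have := Hl (-1) 0 0.
by rewrite scaler0 addr0 scaleN1r addNr.
Qed.

Lemma linD (R : realType) (V : lmodType R[i]) (T : V -> V) :
  (forall (a : R[i]) x y, T (a *: x + y) = a *: T x + T y) -> forall x y, T (x + y) = T x + T y.
Proof. by move=> Hl x y; have := Hl 1 x y; rewrite !scale1r. Qed.

Lemma linZ (R : realType) (V : lmodType R[i]) (T : V -> V) :
  (forall (a : R[i]) x y, T (a *: x + y) = a *: T x + T y) -> forall a x, T (a *: x) = a *: T x.
Proof. by move=> Hl a x; have := Hl a x 0; rewrite addr0 (lin0 Hl) addr0. Qed.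

Lemma linN (R : realType) (V : lmodType R[i]) (T : V -> V) :
  (forall (a : R[i]) x y, T (a *: x + y) = a *: T x + T y) -> forall x, T (- x) = - T x.
Proof. by move=> Hl x; rewrite -scaleN1r (linZ Hl) scaleN1r. Qed.

Lemma linB (R : realType) (V : lmodType R[i]) (T : V -> V) :
  (forall (a : R[i]) x y, T (a *: x + y) = a *: T x + T y) -> forall x y, T (x - y) = T x - T y.
Proof. by move=> Hl x y; rewrite (linD Hl) (linN Hl). Qed.

Lemma bounded_bound (R : realType) (V : lmodType R[i]) (ip : V -> V -> R[i]) T :
  bounded_op ip T -> exists K, 0 <= K /\ forall x, ipnorm ip (T x) <= K * ipnorm ip x.
Proof.
case=> _ [K HK]; exists `|K|; split => // x.
apply: le_trans (HK x) _; apply: ler_wpM2r; first exact: ipnorm_ge0.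
exact: ler_norm.
Qed.

Lemma bounded_ext (R : realType) (V : lmodType R[i]) (ip : V -> V -> R[i]) (f g : V -> V) :
  (forall x, f x = g x) -> bounded_op ip f -> bounded_op ip g.
Proof. by move=> e; have -> : f = g by apply: funext. Qed.

Lemma compact_ext (R : realType) (V : lmodType R[i]) (ip : V -> V -> R[i]) (f g : V -> V) :
  (forall x, f x = g x) -> compact_op ip f -> compact_op ip g.
Proof. by move=> e; have -> : f = g by apply: funext. Qed.

Lemma bounded_id (R : realType) (V : lmodType R[i]) (ip : V -> V -> R[i]) :
  bounded_op ip (fun x => x).
Proof. split=> //; exists 1 => x; by rewrite mul1r. Qed.

Lemma bounded_comp (R : realType) (V : lmodType R[i]) (ip : V -> V -> R[i]) A B :
  bounded_op ip A -> bounded_op ip B -> bounded_op ip (fun x => A (B x)).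
Proof.
move=> hA hB; have [KA [KA0 hKA]] := bounded_bound hA.
have [KB [KB0 hKB]] := bounded_bound hB.
case: hA => lA _; case: hB => lB _.
split; first by move=> a x y; rewrite lB lA.
exists (KA * KB) => x; apply: le_trans (hKA _) _.
rewrite -mulrA; apply: ler_wpM2l => //.
Qed.

Lemma bounded_add (R : realType) (V : lmodType R[i]) (ip : V -> V -> R[i])
  (H : inner_product ip) A B :
  bounded_op ip A -> bounded_op ip B -> bounded_op ip (fun x => A x + B x).
Proof.
move=> hA hB; have [KA [KA0 hKA]] := bounded_bound hA.
have [KB [KB0 hKB]] := bounded_bound hB.
case: hA => lA _; case: hB => lB _.
split.
  move=> a x y; rewrite lA lB scalerDr.
  by rewrite -!addrA; congr (_ + _); rewrite addrCA.
exists (KA + KB) => x; apply: le_trans (ipnormD H _ _) _.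
rewrite mulrDl; exact: lerD.
Qed.

Lemma bounded_scale (R : realType) (V : lmodType R[i]) (ip : V -> V -> R[i])
  (H : inner_product ip) (c : R[i]) A :
  bounded_op ip A -> bounded_op ip (fun x => c *: A x).
Proof.
move=> hA; have [KA [KA0 hKA]] := bounded_bound hA.
case: hA => lA _.
split.
  by move=> a x y; rewrite lA scalerDr !scalerA mulrC.
exists (Num.sqrt ((complex.Re c)^+2 + (complex.Im c)^+2) * KA) => x.
rewrite (ipnormZ H) -mulrA; apply: ler_wpM2l => //; exact: sqrtr_ge0.
Qed.

Lemma compact_compl (R : realType) (V : lmodType R[i]) (ip : V -> V -> R[i]) A K :
  bounded_op ip A -> compact_op ip K -> compact_op ip (fun x => A (K x)).
Proof.
move=> hA [hK cK]; split; first exact: bounded_comp.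
have [KA [KA0 hKA]] := bounded_bound hA.
case: hA => lA _.
move=> u hu; have [phi [hphi [l hl]]] := cK u hu.
exists phi; split => //; exists (A l) => e e0.
have e1 : 0 < e / (KA + 1) by apply: divr_gt0 => //; lra.
have [N hN] := hl _ e1; exists N => n hn.
have := hN n hn; set d := ipnorm ip _ => hd.
rewrite -(linB lA); apply: le_lt_trans (hKA _) _; rewrite -/d.
have d0 : 0 <= d by exact: ipnorm_ge0.
have : d * (KA + 1) < e by rewrite -ltr_pdivlMr //; lra.
nra.
Qed.

Lemma compact_compr (R : realType) (V : lmodType R[i]) (ip : V -> V -> R[i]) K B :
  compact_op ip K -> bounded_op ip B -> compact_op ip (fun x => K (B x)).
Proof.
move=> [hK cK] hB; split; first exact: bounded_comp.
have [KB [KB0 hKB]] := bounded_bound hB.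
move=> u [Ku hu]; apply: (cK (fun n => B (u n))).
exists (KB * Ku) => n; apply: le_trans (hKB _) _; exact: ler_wpM2l.
Qed.

Lemma zmod_id1 (R : realType) (V : lmodType R[i]) (a b c x : V) :
  (a - c) - (b - x) - x = a - b - c.
Proof. by rewrite opprB addrA addrAC addrK addrAC. Qed.

Lemma zmod_id2 (R : realType) (V : lmodType R[i]) (a c x : V) :
  a - (c - x) - x = a - c.
Proof. by rewrite opprB addrA addrAC addrK. Qed.

Lemma key (R : realType) (V : lmodType R[i]) (ip : V -> V -> R[i])
  (H : inner_product ip) (Pr : (V -> V) -> Prop)
  (hext : forall f g, (forall x, f x = g x) -> Pr f -> Pr g)
  (hl : forall A K, bounded_op ip A -> Pr K -> Pr (fun x => A (K x)))
  (hr : forall K B, Pr K -> bounded_op ip B -> Pr (fun x => K (B x)))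
  (X Y T : V -> V) (hX : bounded_op ip X) (hY : bounded_op ip Y)
  (hXY : forall x, X (Y x) = T x) (hYX : forall x, Y (X x) = - T x)
  (z : R[i]) (S : V -> V) (hS : bounded_op ip S)
  (h1 : Pr (fun x => S (op_shift (fun x => - T x) z x) - x))
  (h2 : Pr (fun x => op_shift (fun x => - T x) z (S x) - x)) :
  exists S', bounded_op ip S' /\ Pr (fun x => S' (op_shift T z x) - x)
     /\ Pr (fun x => op_shift T z (S' x) - x).
Proof.
have lX := hX.1; have lY := hY.1; have lS := hS.1.
have hT : bounded_op ip T.
  apply: bounded_ext hXY _; exact: bounded_comp.
have lT := hT.1.
have [ez|wn0] := eqVneq z 0.
  subst z.
  exists (fun x => - S x); split.
    apply: bounded_ext (bounded_scale H (-1) hS) => x; exact: scaleN1r.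
  split.
    apply: hext h1 => x; rewrite /op_shift !scale0r !subr0.
    by rewrite (linN lS).
  apply: hext h2 => x; rewrite /op_shift !scale0r !subr0.
  by rewrite (linN lT).
pose Q := op_shift (fun x => - T x) z.
have hQ : forall x, Q x = Y (X x) - z *: x by move=> x; rewrite /Q /op_shift hYX.
exists (fun x => z^-1 *: (X (S (Y x)) - x)); split.
  apply: (bounded_scale H (z^-1) (A := fun x => X (S (Y x)) - x)).
  apply: (bounded_add H (A := fun x => X (S (Y x))) (B := fun x => - x)).
    by apply: bounded_comp hX _; apply: bounded_comp hS hY.
  apply: bounded_ext (bounded_scale H (-1) (bounded_id ip)) => x; exact: scaleN1r.
have bXs : bounded_op ip (fun v => z^-1 *: X v).
  by apply: bounded_comp (bounded_scale H _ (bounded_id ip)) hX.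
split.
  apply: hext (hl (fun v => z^-1 *: X v) _ bXs (hr _ _ h1 hY)).
  move=> x /=; rewrite /op_shift -hYX.
  rewrite (linB lY) (linZ lY) -!hXY.
  rewrite !(linB lX) !scalerBr scalerA mulVf // scale1r.
  by rewrite zmod_id2.
apply: hext (hl (fun v => z^-1 *: X v) _ bXs (hr _ _ h2 hY)).
move=> x /=; rewrite /op_shift -hYX -!hXY.
rewrite (linZ lY) (linB lY) (linZ lX) !(linB lX) (linZ lX).
rewrite !scalerBr !scalerA mulfV // scale1r mulVf // scale1r.
by rewrite scale1r zmod_id1.
Qed.

Theorem proposition2p12 (R : realType) (V : lmodType R[i]) (ip : V -> V -> R[i])
  (Hhil : is_hilbert ip) (Hsep : ip_separable ip)
  (M N : V -> V) (HM : bounded_op ip M) (HN : bounded_op ip N)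
  (HM2 : forall x, M (M x) = 0) (HN2 : forall x, N (N x) = 0) :
  let T := fun x => M (N x) - N (M x) in
  components_meet (spectrum ip T) (spectrum ip (fun x => - T x)) /\
  components_meet (ess_spectrum ip T) (ess_spectrum ip (fun x => - T x)).
Proof.
move=> T; have H := Hhil.1.
have lM := HM.1; have lN := HN.1.
pose X := fun x => M x - N x; pose Y := fun x => M x + N x.
have hX : bounded_op ip X.
  apply: bounded_ext (bounded_add H HM (bounded_scale H (-1) HN)) => x.
  by rewrite scaleN1r.
have hY : bounded_op ip Y by exact: bounded_add.
have hXY : forall x, X (Y x) = T x.
  move=> x; rewrite /X /Y /T (linD lM) (linD lN) HM2 HN2.
  by rewrite add0r addr0.
have hYX : forall x, Y (X x) = - T x.
  move=> x; rewrite /X /Y /T (linB lM) (linB lN) HM2 HN2.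
  by rewrite sub0r subr0 opprB addrC.
split.
  move=> z hz; exists z; split; first exact: connected_component_refl.
  move=> [S [bS [h1 h2]]]; apply: hz.
  have [S' [bS' [e1 e2]]] := key H (Pr := fun f => forall x, f x = 0)
    (fun f g e hf x => etrans (esym (e x)) (hf x))
    (fun A K hA hK x => etrans (f_equal A (hK x)) (lin0 hA.1))
    (fun K B hK _ x => hK (B x))
    hX hY hXY hYX bS (fun x => etrans (f_equal (fun v => v - x) (h1 x)) (subrr x))
    (fun x => etrans (f_equal (fun v => v - x) (h2 x)) (subrr x)).
  exists S'; split => //; split => x; apply/eqP; rewrite -subr_eq0; apply/eqP.
    exact: e1.
  exact: e2.
move=> z hz; exists z; split; first exact: connected_component_refl.
move=> [S [bS [h1 h2]]]; apply: hz.
have [S' [bS' [e1 e2]]] := key H (Pr := compact_op ip)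
  (@compact_ext _ _ ip) (@compact_compl _ _ ip) (@compact_compr _ _ ip)
  hX hY hXY hYX bS h1 h2.
by exists S'.
Qed.
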